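(* Let $f \in C^1(\mathcal{T})$ and $g \in C^1([0,1])$, where $\mathcal{T}=\{(x,y)\in\mathbb{R}^2: 0\le y\le x\le 1\}$, and set $M_f=\sup_{(x,y)\in\mathcal{T}}|f(x,y)|$. Let $k\in C^1(\mathcal{T})$ be the solution of the Goursat problem $$k_y(x,y)+k_x(x,y)=f(x,y)-\int_y^x f(x,\eta)k(\eta,y)\,d\eta \ \ \forall (x,y)\in\mathcal{T},\qquad k(1,y)=0\ \ \forall y\in[0,1],$$ and define the observer gain $p_1(x)=g(x)-k(x,0)$. Consider the plant $$u_t(x,t)=u_x(x,t)+g(x)u(0,t)+\int_0^x f(x,y)u(y,t)\,dy,\qquad u(1,t)=U(t),\qquad Y(t)=u(0,t),$$ with initial condition $u(\cdot,0)=u_0$, and the observer $$\hat u_t(x,t)=\hat u_x(x,t)+g(x)\hat u(0,t)+\int_0^x f(x,y)\hat u(y,t)\,dy+p_1(x)\,[u(0,t)-\hat u(0,t)],\qquad \hat u(1,t)=U(t),$$ with initial condition $\hat u(\cdot,0)=\hat u_0$. Let $U\in C^1(\mathbb{R}^+)$ and $u_0,\hat u_0\in C^1([0,1])$ satisfy the compatibility conditions $$u_0(1)=U(0),\qquad \dot U(0)=u_0'(1)+g(1)u_0(0)+\int_0^1 f(1,y)u_0(y)\,dy,$$ $$\hat u_0(1)=U(0),\qquad \dot U(0)=\hat u_0'(1)+g(1)\hat u_0(0)+\int_0^1 f(1,y)\hat u_0(y)\,dy+p_1(1)\,[u_0(0)-\hat u_0(0)].$$ Then for all $t\ge 0$ and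 all $c>0$, the (classical) solutions satisfy $$\|u[t]-\hat u[t]\|\le M e^{-ct}\|u_0-\hat u_0\|,\qquad M=e^{c}\Big(1+\big(M_f e^{M_f}\big)e^{M_f e^{M_f}}\Big)\big(1+M_f e^{M_f}\big).$$ Moreover, $\hat u(x,t)=u(x,t)$ for all $x\in[0,1]$ and all $t\ge 1$, i.e., the observer error is zero for $t\ge 1$ and remains zero thereafter.
   Context: $\mathbb{R}^+=[0,\infty)$. For a function $u:[0,1]\times\mathbb{R}^+\to\mathbb{R}$, $u[t]$ denotes the profile $x\mapsto u(x,t)$, and $\|\cdot\|$ is the norm of $L^2(0,1)$. The Goursat problem for $k$ has a unique $C^1(\mathcal{T})$ solution under the stated regularity of $f$, $g$. Under the stated compatibility conditions the plant and observer systems have unique classical solutions defined for all $t\ge 0$. *)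

(* Defs.v *)
From Stdlib Require Import Reals.
From Coquelicot Require Import Coquelicot.
Open Scope R_scope.

Definition pdx (h : R -> R -> R) (x y : R) : R := Derive (fun x' => h x' y) x.
Definition pdy (h : R -> R -> R) (x y : R) : R := Derive (fun y' => h x y') y.

Definition C1_R (h : R -> R) : Prop :=
  (forall x, ex_derive h x) /\ (forall x, continuous (Derive h) x).

Definition C1_R2 (h : R -> R -> R) : Prop :=
  (forall x y, ex_derive (fun x' => h x' y) x) /\
  (forall x y, ex_derive (fun y' => h x y') y) /\
  (forall x y, continuous (fun p : R * R => h (fst p) (snd p)) (x, y)) /\
  (forall x y, continuous (fun p : R * R => pdx h (fst p) (snd p)) (x, y)) /\
  (forall x y, continuous (fun p : R * R => pdy h (fst p) (snd p)) (x, y)).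

(* h is C^1 on the (closed) set I with derivative h' on I: h is the
   restriction to I of a C^1 function H on R, and h' = H' on I
   (for the closed intervals used below, h' on the boundary is the
   one-sided derivative). *)
Definition C1_on (I : R -> Prop) (h h' : R -> R) : Prop :=
  exists H : R -> R, C1_R H /\ forall x, I x -> H x = h x /\ Derive H x = h' x.

Definition C1_on2 (D : R -> R -> Prop) (h hx hy : R -> R -> R) : Prop :=
  exists H : R -> R -> R, C1_R2 H /\
    forall x y, D x y -> H x y = h x y /\ pdx H x y = hx x y /\ pdy H x y = hy x y.

Definition Tri (x y : R) : Prop := 0 <= y /\ y <= x /\ x <= 1.

Definition I01 (x : R) : Prop := 0 <= x <= 1.
Definition Rplus_set (t : R) : Prop := 0 <= t.

Definition Dom (x t : R) : Prop := 0 <= x <= 1 /\ 0 <= t.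

Definition L2norm (h : R -> R) : R := sqrt (RInt (fun x => (h x) ^ 2) 0 1).

(* Main.v *)
Require Import Defs.
From Stdlib Require Import Reals.
From Coquelicot Require Import Coquelicot.
Open Scope R_scope.
From Stdlib Require Import Lra Lia Factorial.


Definition Cont2 (h : R -> R -> R) : Prop :=
  forall x y : R, continuous (fun p : R * R => h (fst p) (snd p)) (x, y).

Definition Cont1 (w : R -> R) : Prop := forall x, continuous w x.

Lemma c1_plus f g x : continuous f x -> continuous g x -> continuous (fun y : R => f y + g y) x.
Proof. intros; apply (continuous_plus f g); auto. Qed.
Lemma c1_minus f g x : continuous f x -> continuous g x -> continuous (fun y : R => f y - g y) x.
Proof. intros; apply (continuous_minus f g); auto. Qed.
Lemma c1_mult f g x : continuous f x -> continuous g x -> continuous (fun y : R => f y * g y) x.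
Proof. intros; apply (continuous_mult f g); auto. Qed.

Lemma Cont2_pt (h : R -> R -> R) (p : R * R) : Cont2 h -> continuous (fun q : R*R => h (fst q) (snd q)) p.
Proof. destruct p; intros H; apply H. Qed.

Lemma cont_comp2 (h : R -> R -> R) (a b : R -> R) x :
  Cont2 h -> continuous a x -> continuous b x -> continuous (fun y => h (a y) (b y)) x.
Proof. intros H Ha Hb. apply (continuous_comp_2 a b h); auto. Qed.

Lemma cont_comp2' {U : UniformSpace} (h : R -> R -> R) (a b : U -> R) x :
  Cont2 h -> continuous a x -> continuous b x -> continuous (fun y => h (a y) (b y)) x.
Proof. intros H Ha Hb. apply (continuous_comp_2 a b h); auto. Qed.

Lemma Cont2_comp (h a b : R -> R -> R) : Cont2 h -> Cont2 a -> Cont2 b ->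
  Cont2 (fun x y => h (a x y) (b x y)).
Proof. intros H Ha Hb x y. apply (cont_comp2' h (fun p : R*R => a (fst p) (snd p)) (fun p : R*R => b (fst p) (snd p))); auto. Qed.

Lemma Cont2_plus (a b : R -> R -> R) : Cont2 a -> Cont2 b -> Cont2 (fun x y => a x y + b x y).
Proof. intros Ha Hb x y; apply (continuous_plus (fun p : R*R => a (fst p) (snd p)) (fun p : R*R => b (fst p) (snd p))); auto. Qed.
Lemma Cont2_minus (a b : R -> R -> R) : Cont2 a -> Cont2 b -> Cont2 (fun x y => a x y - b x y).
Proof. intros Ha Hb x y; apply (continuous_minus (fun p : R*R => a (fst p) (snd p)) (fun p : R*R => b (fst p) (snd p))); auto. Qed.
Lemma Cont2_mult (a b : R -> R -> R) : Cont2 a -> Cont2 b -> Cont2 (fun x y => a x y * b x y).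
Proof. intros Ha Hb x y; apply (continuous_mult (fun p : R*R => a (fst p) (snd p)) (fun p : R*R => b (fst p) (snd p))); auto. Qed.
Lemma Cont2_fst : Cont2 (fun x y => x).
Proof. intros x y; apply continuous_fst. Qed.
Lemma Cont2_snd : Cont2 (fun x y => y).
Proof. intros x y; apply continuous_snd. Qed.
Lemma Cont2_const c : Cont2 (fun x y => c).
Proof. intros x y; apply continuous_const. Qed.
Lemma Cont2_w1 (w : R -> R) : Cont1 w -> Cont2 (fun x y => w x).
Proof. intros H x y; apply (continuous_comp (fun p : R*R => fst p) w); [apply continuous_fst| apply H]. Qed.
Lemma Cont2_w2 (w : R -> R) : Cont1 w -> Cont2 (fun x y => w y).
Proof. intros H x y; apply (continuous_comp (fun p : R*R => snd p) w); [apply continuous_snd| apply H]. Qed.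

Lemma Cont1_id : Cont1 (fun x => x).
Proof. intros x; apply continuous_id. Qed.
Lemma Cont1_const c : Cont1 (fun _ => c).
Proof. intros x; apply continuous_const. Qed.

Lemma Cont2_1 (h : R -> R -> R) (a b : R -> R) : Cont2 h -> Cont1 a -> Cont1 b -> Cont1 (fun y => h (a y) (b y)).
Proof. intros H Ha Hb x; apply cont_comp2; auto. Qed.

Lemma exRInt_C (w : R -> R) a b : Cont1 w -> ex_RInt w a b.
Proof. intros H; apply (ex_RInt_continuous (V:=R_CompleteNormedModule)); intros; apply H. Qed.

Lemma Cont2_2d (h : R -> R -> R) x y : Cont2 h -> continuity_2d_pt h x y.
Proof. intros H. apply continuity_2d_pt_filterlim. apply (H x y). Qed.

Lemma C1_diff H : C1_R2 H -> forall x y, differentiable_pt_lim H x y (pdx H x y) (pdy H x y).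
Proof.
  intros [Hx [Hy [Hc [Hcx Hcy]]]] x y.
  apply filterdiff_differentiable_pt_lim.
  eapply filterdiff_ext_lin.
  apply (is_derive_filterdiff H x y (pdx H) (pdy H x y)).
  - apply filter_forall. intros u. apply Derive_correct. apply Hx.
  - apply Derive_correct. apply Hy.
  - apply Hcx.
  - intros u. simpl. reflexivity.
Qed.

Lemma C1_line H a b p q s : C1_R2 H ->
  is_derive (fun s => H (a + p * s) (b + q * s)) s
    (pdx H (a + p * s) (b + q * s) * p + pdy H (a + p * s) (b + q * s) * q).
Proof.
  intros HH. apply is_derive_Reals.
  apply (derivable_pt_lim_comp_2d H (fun s => a + p * s) (fun s => b + q * s)).
  - apply C1_diff; auto.
  - apply is_derive_Reals. auto_derive; auto. ring.
  - apply is_derive_Reals. auto_derive; auto. ring.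
Qed.

Lemma C1_Cont2 H : C1_R2 H -> Cont2 H.
Proof. intros [_ [_ [Hc _]]]; exact Hc. Qed.
Lemma C1_Cont2x H : C1_R2 H -> Cont2 (pdx H).
Proof. intros [_ [_ [_ [Hc _]]]]; exact Hc. Qed.
Lemma C1_Cont2y H : C1_R2 H -> Cont2 (pdy H).
Proof. intros [_ [_ [_ [_ Hc]]]]; exact Hc. Qed.

Lemma Cont2_t (h : R -> R -> R) x : Cont2 h -> Cont1 (fun t => h x t).
Proof. intros H t. apply (cont_comp2 h (fun _ => x) (fun t => t)); auto; [apply continuous_const|apply continuous_id]. Qed.
Lemma Cont2_x (h : R -> R -> R) t : Cont2 h -> Cont1 (fun x => h x t).
Proof. intros H x. apply (cont_comp2 h (fun x => x) (fun _ => t)); auto; [apply continuous_id|apply continuous_const]. Qed.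

Lemma Derive_dh (h dh : R -> R -> R) :
  (forall u t, is_derive (fun z => h z t) u (dh u t)) ->
  forall u t, Derive (fun z => h z t) u = dh u t.
Proof. intros H u t; apply is_derive_unique; auto. Qed.

Lemma locally_2d_all (P : R -> R -> Prop) x y : (forall u v, P u v) -> locally_2d P x y.
Proof. intros H. exists (mkposreal 1 Rlt_0_1). intros; auto. Qed.

Lemma param_deriv (h dh : R -> R -> R) (a b : R -> R) x da db :
  (forall u t, is_derive (fun z => h z t) u (dh u t)) -> Cont2 dh -> Cont2 h ->
  is_derive a x da -> is_derive b x db ->
  is_derive (fun x => RInt (fun t => h x t) (a x) (b x)) x
    (RInt (fun t => dh x t) (a x) (b x) - h x (a x) * da + h x (b x) * db).
Proof.
  intros Hd Cdh Ch Ha Hb.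
  assert (E := Derive_dh h dh Hd).
  assert (Hex : forall y c d, ex_RInt (fun t => h y t) c d).
  { intros; apply exRInt_C; apply Cont2_t; auto. }
  assert (Hc2 : forall u v, continuity_2d_pt (fun u v : R => Derive (fun z : R => h z v) u) u v).
  { intros u v. apply continuity_2d_pt_ext with dh. intros; rewrite E; auto. apply Cont2_2d; auto. }
  eapply is_derive_ext_loc; [| eapply is_derive_ext; [intros; reflexivity|]].
  apply filter_forall. intros; reflexivity.
  replace (RInt (fun t => dh x t) (a x) (b x) - h x (a x) * da + h x (b x) * db)
    with (RInt (fun t : R => Derive (fun u : R => h u t) x) (a x) (b x) + - h x (a x) * da + h x (b x) * db).
  2:{ rewrite (RInt_ext _ (fun t => dh x t)); [ring| intros; apply E]. }
  apply is_derive_RInt_param_bound_comp; auto.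
  - apply filter_forall; intros; apply Hex.
  - exists (mkposreal 1 Rlt_0_1). apply filter_forall; intros; apply Hex.
  - exists (mkposreal 1 Rlt_0_1). apply filter_forall; intros; apply Hex.
  - exists (mkposreal 1 Rlt_0_1). apply filter_forall; intros. eexists; apply Hd.
  - apply locally_2d_all; auto.
  - apply locally_2d_all; auto.
  - apply continuity_pt_filterlim. apply (Cont2_t h x Ch).
  - apply continuity_pt_filterlim. apply (Cont2_t h x Ch).
Qed.

Lemma Cont2_eps (F : R -> R -> R) :
  (forall x0 u0 (eps : posreal), exists d : posreal, forall x u,
     Rabs (x - x0) < d -> Rabs (u - u0) < d -> Rabs (F x u - F x0 u0) < eps) -> Cont2 F.
Proof.
  intros H x0 u0. unfold continuous. apply filterlim_locally. intros eps.
  destruct (H x0 u0 eps) as [d Hd].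
  apply (proj1 (locally_2d_locally (fun u v => ball (F x0 u0) eps (F u v)) x0 u0)). exists d.
  intros u v H1 H2. change (Rabs (F u v - F x0 u0) < eps). apply Hd; auto.
Qed.

Lemma RInt_correct_R (g : R -> R) a b : ex_RInt g a b -> is_RInt g a b (RInt g a b).
Proof. intros; apply (RInt_correct (V:=R_CompleteNormedModule)); auto. Qed.

Lemma RInt_abs_bound g c u K : ex_RInt g c u ->
  (forall t, Rmin c u <= t <= Rmax c u -> Rabs (g t) <= K) -> Rabs (RInt g c u) <= Rabs (u - c) * K.
Proof.
  intros Hex Hb. destruct (Rle_dec c u) as [Hcu|Hcu].
  - rewrite (Rabs_right (u - c)) by lra.
    refine (norm_RInt_le_const (V:=R_NormedModule) g c u (RInt g c u) K Hcu _ _).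
    + intros t Ht; apply Hb. rewrite Rmin_left, Rmax_right; lra.
    + apply RInt_correct_R; auto.
  - rewrite <- opp_RInt_swap by (apply ex_RInt_swap; auto). change (opp (RInt g u c)) with (- RInt g u c).
    rewrite Rabs_Ropp, (Rabs_left1 (u - c)) by lra. replace (- (u - c)) with (c - u) by ring.
    refine (norm_RInt_le_const (V:=R_NormedModule) g u c (RInt g u c) K _ _ _); [lra| |].
    + intros t Ht; apply Hb. rewrite Rmin_right, Rmax_left; lra.
    + apply RInt_correct_R. apply ex_RInt_swap; auto.
Qed.

Lemma Cont1_cont_pt (w : R -> R) x (eps : posreal) : continuous w x ->
  exists d : posreal, forall y, Rabs (y - x) < d -> Rabs (w y - w x) < eps.
Proof.
  intros H. assert (H' : continuity_pt w x) by (apply continuity_pt_filterlim; exact H).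
  destruct (proj1 (continuity_pt_locally w x) H' eps) as [d Hd]. exists d. intros; apply Hd; auto.
Qed.

Lemma RInt_var_cont (h : R -> R -> R) c : Cont2 h -> Cont2 (fun x u => RInt (h x) c u).
Proof.
  intros Hh. apply Cont2_eps. intros x0 u0 eps.
  set (A := Rmin c u0 - 1). set (B := Rmax c u0 + 1).
  set (L := Rabs (u0 - c) + 1).
  assert (HL : 0 < L) by (unfold L; pose proof (Rabs_pos (u0 - c)); lra).
  assert (He1 : 0 < eps / 2 / L) by (apply Rdiv_lt_0_compat; [destruct eps; simpl; lra| auto]).
  destruct (uniform_continuity_2d h (x0 - 1) (x0 + 1) A B) with (eps := mkposreal _ He1) as [d1 Hd1].
  { intros; apply Cont2_2d; auto. }
  assert (Hw : continuous (fun u => RInt (h x0) c u) u0).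
  { apply (ex_derive_continuous (K:=R_AbsRing) (V:=R_NormedModule)).
    eexists. apply (is_derive_RInt (V:=R_NormedModule) (h x0) (fun u => RInt (h x0) c u) c u0).
    apply filter_forall; intros; apply RInt_correct_R; apply exRInt_C; apply Cont2_t; auto.
    apply (Cont2_t h x0 Hh). }
  assert (He2 : 0 < eps / 2) by (destruct eps; simpl; lra).
  destruct (Cont1_cont_pt _ u0 (mkposreal _ He2) Hw) as [d2 Hd2].
  assert (Hd : 0 < Rmin 1 (Rmin d1 d2)).
  { apply Rmin_pos; [lra|apply Rmin_pos; destruct d1, d2; simpl; auto]. }
  exists (mkposreal _ Hd). simpl. intros x u Hx Hu.
  assert (Hx1 : Rabs (x - x0) < 1) by (eapply Rlt_le_trans; [apply Hx| apply Rmin_l]).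
  assert (Hxd : Rabs (x - x0) < d1) by (eapply Rlt_le_trans; [apply Hx| eapply Rle_trans; [apply Rmin_r| apply Rmin_l]]).
  assert (Hu1 : Rabs (u - u0) < 1) by (eapply Rlt_le_trans; [apply Hu| apply Rmin_l]).
  assert (Hud : Rabs (u - u0) < d2) by (eapply Rlt_le_trans; [apply Hu| eapply Rle_trans; [apply Rmin_r| apply Rmin_r]]).
  assert (Hex : forall y a b, ex_RInt (h y) a b) by (intros; apply exRInt_C; apply Cont2_t; auto).
  replace (RInt (h x) c u - RInt (h x0) c u0) with
    (RInt (fun t => h x t - h x0 t) c u + (RInt (h x0) c u - RInt (h x0) c u0)).
  2:{ rewrite (RInt_minus (V:=R_CompleteNormedModule) (h x) (h x0)); auto. change (minus ?a ?b) with (a - b). ring. }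
  eapply Rle_lt_trans; [apply Rabs_triang|].
  replace (pos eps) with (eps / 2 + eps / 2) by field.
  apply Rplus_le_lt_compat; [| apply (Hd2 u Hud)].
  eapply Rle_trans. apply RInt_abs_bound with (K := eps / 2 / L).
  { apply (ex_RInt_minus (V:=R_NormedModule)); auto. }
  { intros t Ht. apply Rlt_le.
    assert (HtAB : A <= t <= B).
    { unfold A, B. apply Rabs_def2 in Hu1. revert Ht. unfold Rmin, Rmax.
      destruct (Rle_dec c u); destruct (Rle_dec c u0); lra. }
    apply Rabs_def2 in Hx1.
    apply (Hd1 x0 t x t); try lra.
    replace (t - t) with 0 by ring. rewrite Rabs_R0. destruct d1; simpl; lra. }
  unfold L. replace (eps / 2) with (eps / 2 / L * L) at 2 by (field; lra).
  rewrite Rmult_comm. apply Rmult_le_compat_l; [lra|].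
  replace (u - c) with ((u - u0) + (u0 - c)) by ring.
  eapply Rle_trans; [apply Rabs_triang|]. unfold L. lra.
Qed.

Lemma Cont2_swap (h : R -> R -> R) : Cont2 h -> Cont2 (fun x y => h y x).
Proof. intros H. apply (Cont2_comp h (fun x y => y) (fun x y => x)); auto using Cont2_fst, Cont2_snd. Qed.

Lemma exRInt_R (g : R -> R) a b : ex_RInt g a b -> ex_RInt (V:=R_NormedModule) g a b.
Proof. auto. Qed.

Lemma RInt_split0 (g : R -> R) a b : Cont1 g -> RInt g a b = RInt g 0 b - RInt g 0 a.
Proof.
  intros H. assert (E : RInt g 0 a + RInt g a b = RInt g 0 b).
  { apply (RInt_Chasles (V:=R_CompleteNormedModule) g 0 a b); apply exRInt_C; auto. }
  lra.
Qed.

Lemma param_cont (h : R -> R -> R) (a b : R -> R) : Cont2 h -> Cont1 a -> Cont1 b ->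
  Cont1 (fun x => RInt (h x) (a x) (b x)).
Proof.
  intros Hh Ha Hb x.
  apply continuous_ext with (fun x => RInt (h x) 0 (b x) - RInt (h x) 0 (a x)).
  { intros y. rewrite (RInt_split0 (h y) (a y) (b y)); auto. apply Cont2_t; auto. }
  apply c1_minus.
  - apply (cont_comp2 (fun x u => RInt (h x) 0 u)); auto. apply RInt_var_cont; auto. apply continuous_id.
  - apply (cont_comp2 (fun x u => RInt (h x) 0 u)); auto. apply RInt_var_cont; auto. apply continuous_id.
Qed.

Lemma Cont2_RInt_var (h : R -> R -> R) (a b : R -> R -> R) : Cont2 h -> Cont2 a -> Cont2 b ->
  Cont2 (fun x y => RInt (h x) (a x y) (b x y)).
Proof.
  intros Hh Ha Hb x y.
  apply continuous_ext with (fun p : R * R => RInt (h (fst p)) 0 (b (fst p) (snd p)) - RInt (h (fst p)) 0 (a (fst p) (snd p))).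
  { intros [p1 p2]. simpl. rewrite (RInt_split0 (h p1) (a p1 p2) (b p1 p2)); auto. apply Cont2_t; auto. }
  apply (continuous_minus (fun p : R * R => RInt (h (fst p)) 0 (b (fst p) (snd p))) (fun p : R * R => RInt (h (fst p)) 0 (a (fst p) (snd p)))).
  - apply (Cont2_comp (fun x u => RInt (h x) 0 u) (fun x y => x) b); auto using Cont2_fst. apply RInt_var_cont; auto.
  - apply (Cont2_comp (fun x u => RInt (h x) 0 u) (fun x y => x) a); auto using Cont2_fst. apply RInt_var_cont; auto.
Qed.

Lemma deriv_cont (phi : R -> R) x d : is_derive phi x d -> continuity_pt phi x.
Proof. intros H. apply continuity_pt_filterlim. apply (ex_derive_continuous (K:=R_AbsRing) (V:=R_NormedModule)). eexists; eauto. Qed.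

Lemma deriv_nonpos (phi dphi : R -> R) a b : a <= b ->
  (forall x, a <= x <= b -> is_derive phi x (dphi x)) -> (forall x, a <= x <= b -> dphi x <= 0) ->
  phi b <= phi a.
Proof.
  intros Hab Hd Hn.
  destruct (MVT_gen phi a b dphi) as [c [Hc E]].
  - intros x Hx. rewrite Rmin_left, Rmax_right in Hx by lra. apply Hd; lra.
  - intros x Hx. rewrite Rmin_left, Rmax_right in Hx by lra. eapply deriv_cont. apply Hd; lra.
  - rewrite Rmin_left, Rmax_right in Hc by lra.
    assert (dphi c * (b - a) <= 0). { apply Rmult_le_0_r; [apply Hn; lra| lra]. } lra.
Qed.

Lemma deriv_zero (phi : R -> R) a b : (forall x, is_derive phi x 0) -> phi a = phi b.
Proof.
  intros H. destruct (MVT_gen phi a b (fun _ => 0)) as [c [_ E]].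
  - intros; auto.
  - intros; eapply deriv_cont; eauto.
  - lra.
Qed.

Lemma deriv_compare (phi dphi psi dpsi : R -> R) a b : a <= b ->
  (forall x, a <= x <= b -> is_derive phi x (dphi x)) ->
  (forall x, a <= x <= b -> is_derive psi x (dpsi x)) ->
  (forall x, a <= x <= b -> Rabs (dphi x) <= dpsi x) ->
  Rabs (phi b - phi a) <= psi b - psi a.
Proof.
  intros Hab H1 H2 H3.
  assert (A1 : (fun x => phi x - psi x) b <= (fun x => phi x - psi x) a).
  { apply (deriv_nonpos (fun x => phi x - psi x) (fun x => dphi x - dpsi x) a b); auto.
    - intros x Hx. apply (is_derive_minus (K:=R_AbsRing) (V:=R_NormedModule)); auto.
    - intros x Hx. specialize (H3 x Hx). apply Rabs_le_between in H3. lra. }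
  assert (A2 : (fun x => - phi x - psi x) b <= (fun x => - phi x - psi x) a).
  { apply (deriv_nonpos (fun x => - phi x - psi x) (fun x => - dphi x - dpsi x) a b); auto.
    - intros x Hx. apply (is_derive_minus (K:=R_AbsRing) (V:=R_NormedModule)); auto.
      apply (is_derive_opp (K:=R_AbsRing) (V:=R_NormedModule)); auto.
    - intros x Hx. specialize (H3 x Hx). apply Rabs_le_between in H3. lra. }
  simpl in A1, A2. apply Rabs_le. lra.
Qed.

Lemma FTC_deriv (g : R -> R) a x : Cont1 g -> is_derive (fun z => RInt g a z) x (g x).
Proof.
  intros H. apply (is_derive_RInt (V:=R_NormedModule) g (fun z => RInt g a z) a x).
  apply filter_forall; intros; apply RInt_correct_R; apply exRInt_C; auto. apply H.
Qed.

Lemma RInt_pt (g : R -> R) a : RInt g a a = 0.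
Proof. apply (RInt_point (V:=R_CompleteNormedModule)). Qed.

Lemma fubini_tri (h : R -> R -> R) : Cont2 h -> forall X,
  RInt (fun y => RInt (fun eta => h eta y) y X) 0 X = RInt (fun eta => RInt (fun y => h eta y) 0 eta) 0 X.
Proof.
  intros Hh X.
  set (L := fun X => RInt (fun y => RInt (fun eta => h eta y) y X) 0 X).
  set (Rr := fun X => RInt (fun eta => RInt (fun y => h eta y) 0 eta) 0 X).
  assert (HD : forall X, is_derive (fun X => L X - Rr X) X 0).
  { intros Y. replace 0 with (RInt (fun t => h Y t) 0 Y - RInt (fun y => h Y y) 0 Y) by ring.
    apply (is_derive_minus (K:=R_AbsRing) (V:=R_NormedModule)).
    - unfold L.
      assert (Hp := param_deriv (fun X y => RInt (fun eta => h eta y) y X) (fun X y => h X y)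
               (fun _ => 0) (fun X => X) Y 0 1).
      replace (RInt (fun t => h Y t) 0 Y) with
        (RInt (fun t => h Y t) 0 Y - RInt (fun eta => h eta 0) 0 Y * 0 + RInt (fun eta => h eta Y) Y Y * 1)
        by (rewrite RInt_pt; ring).
      apply Hp.
      + intros u t. cbv beta. apply (FTC_deriv (fun eta => h eta t) t u). apply Cont2_x; auto.
      + exact Hh.
      + apply Cont2_swap.
        apply (Cont2_RInt_var (fun y eta => h eta y) (fun y X => y) (fun y X => X)); auto using Cont2_fst, Cont2_snd.
        apply Cont2_swap; auto.
      + apply (is_derive_const (K:=R_AbsRing) (V:=R_NormedModule)).
      + apply (is_derive_id (K:=R_AbsRing)).
    - unfold Rr. apply (FTC_deriv (fun eta => RInt (fun y => h eta y) 0 eta)).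
      apply (param_cont h (fun _ => 0) (fun x => x)); auto using Cont1_const, Cont1_id. }
  assert (E := deriv_zero _ X 0 HD). simpl in E. unfold L, Rr in *.
  rewrite !RInt_pt in E. lra.
Qed.

Lemma chain_bound (phi : R -> R) a b dl : 0 < dl ->
  (forall x x', a <= x <= b -> a <= x' <= b -> Rabs (x - x') <= dl -> phi x <= phi x' + 1) ->
  forall n : nat, forall x, a <= x <= b -> x <= a + INR n * dl -> phi x <= phi a + INR n.
Proof.
  intros Hdl H n. induction n as [|n IH]; intros x Hx Hxn.
  - simpl in *. assert (x = a) by lra. subst; lra.
  - rewrite S_INR in *. destruct (Rle_dec x (a + INR n * dl)) as [Hl|Hl].
    + specialize (IH x Hx Hl). lra.
    + set (x' := Rmax a (x - dl)).
      assert (Hx' : a <= x' <= b).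
      { unfold x'. split; [apply Rmax_l|]. apply Rmax_lub; lra. }
      assert (Hx'n : x' <= a + INR n * dl).
      { unfold x'. apply Rmax_lub; [pose proof (pos_INR n); nra | lra]. }
      specialize (IH x' Hx' Hx'n).
      assert (phi x <= phi x' + 1).
      { apply H; auto. unfold x'. unfold Rmax. destruct (Rle_dec a (x - dl)).
        - replace (x - (x - dl)) with dl by ring. rewrite Rabs_right; lra.
        - rewrite Rabs_right; lra. }
      lra.
Qed.

Lemma arch_N a b dl : 0 < dl -> exists N : nat, b <= a + INR N * dl.
Proof.
  intros Hdl. destruct (Rle_dec b a) as [Hba|Hba].
  - exists 0%nat. simpl. lra.
  - destruct (nfloor_ex ((b - a) / dl)) as [n Hn].
    { apply Rdiv_le_0_compat; lra. }
    exists (S n). rewrite S_INR.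
    assert ((b - a) / dl * dl = b - a) by (field; lra).
    destruct Hn as [_ Hn]. apply (Rmult_lt_compat_r dl) in Hn; auto. lra.
Qed.

Lemma Cont2_bounded (h : R -> R -> R) a b c d : Cont2 h ->
  exists S, forall x y, a <= x <= b -> c <= y <= d -> Rabs (h x y) <= S.
Proof.
  intros Hh.
  destruct (uniform_continuity_2d h a b c d) with (eps := mkposreal 1 Rlt_0_1) as [dl Hdl].
  { intros; apply Cont2_2d; auto. }
  assert (Hdl2 : 0 < dl / 2) by (destruct dl; simpl; lra).
  assert (Hstep : forall x y u v, a <= x <= b -> c <= y <= d -> a <= u <= b -> c <= v <= d ->
            Rabs (u - x) <= dl / 2 -> Rabs (v - y) <= dl / 2 -> Rabs (h u v) <= Rabs (h x y) + 1).
  { intros x y u v Hx Hy Hu Hv H1 H2.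
    assert (Rabs (h u v - h x y) < 1).
    { apply (Hdl x y u v); auto; destruct dl; simpl in *; lra. }
    assert (Rabs (h u v) <= Rabs (h u v - h x y) + Rabs (h x y)).
    { replace (h u v) with ((h u v - h x y) + h x y) at 1 by ring. apply Rabs_triang. }
    lra. }
  destruct (arch_N a b (dl/2) Hdl2) as [N1 HN1].
  destruct (arch_N c d (dl/2) Hdl2) as [N2 HN2].
  exists (Rabs (h a c) + INR N2 + INR N1).
  intros x y Hx Hy.
  assert (Hy' : Rabs (h a y) <= Rabs (h a c) + INR N2).
  { apply (chain_bound (fun y => Rabs (h a y)) c d (dl/2)); auto; try lra.
    intros y1 y2 Hy1 Hy2 H. apply (Hstep a y2 a y1); auto; try lra.
    rewrite Rminus_eq_0, Rabs_R0; lra. }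
  assert (Hx' : Rabs (h x y) <= Rabs (h a y) + INR N1).
  { apply (chain_bound (fun x => Rabs (h x y)) a b (dl/2)); auto; try lra.
    intros x1 x2 Hx1 Hx2 H. apply (Hstep x2 y x1 y); auto; try lra.
    rewrite Rminus_eq_0, Rabs_R0; lra. }
  lra.
Qed.

Lemma RInt_plus_R (u v : R -> R) a b : ex_RInt u a b -> ex_RInt v a b ->
  RInt (fun x => u x + v x) a b = RInt u a b + RInt v a b.
Proof. intros; apply (RInt_plus (V:=R_CompleteNormedModule)); auto. Qed.
Lemma RInt_minus_R (u v : R -> R) a b : ex_RInt u a b -> ex_RInt v a b ->
  RInt (fun x => u x - v x) a b = RInt u a b - RInt v a b.
Proof. intros; apply (RInt_minus (V:=R_CompleteNormedModule)); auto. Qed.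
Lemma RInt_scal_R (u : R -> R) c a b : ex_RInt u a b ->
  RInt (fun x => c * u x) a b = c * RInt u a b.
Proof. intros; apply (RInt_scal (V:=R_CompleteNormedModule)); auto. Qed.
Lemma RInt_const_R c a b : RInt (fun _ => c) a b = (b - a) * c.
Proof. apply (RInt_const (V:=R_CompleteNormedModule)). Qed.

Lemma Cont1_plus u v : Cont1 u -> Cont1 v -> Cont1 (fun x => u x + v x).
Proof. intros; intro; apply c1_plus; auto. Qed.
Lemma Cont1_minus u v : Cont1 u -> Cont1 v -> Cont1 (fun x => u x - v x).
Proof. intros; intro; apply c1_minus; auto. Qed.
Lemma Cont1_mult u v : Cont1 u -> Cont1 v -> Cont1 (fun x => u x * v x).
Proof. intros; intro; apply c1_mult; auto. Qed.
Lemma Cont1_abs u : Cont1 u -> Cont1 (fun x => Rabs (u x)).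
Proof. intros H x. apply (continuous_comp u Rabs). apply H. apply continuous_Rabs. Qed.
Lemma Cont1_ext u v : (forall x, u x = v x) -> Cont1 u -> Cont1 v.
Proof. intros E H x. apply continuous_ext with u; auto. Qed.
Lemma Cont1_sq u : Cont1 u -> Cont1 (fun x => u x ^ 2).
Proof. intros H. apply Cont1_ext with (fun x => u x * (u x * 1)). intros; simpl; reflexivity. apply Cont1_mult; auto. apply Cont1_mult; auto using Cont1_const. Qed.

Lemma RInt_ext_R (u v : R -> R) a b : (forall x, u x = v x) -> RInt u a b = RInt v a b.
Proof. intros H; apply RInt_ext; intros; apply H. Qed.

Lemma RInt_lin3 (u v w : R -> R) p q r a b : Cont1 u -> Cont1 v -> Cont1 w ->
  RInt (fun x => p * u x + q * v x + r * w x) a b = p * RInt u a b + q * RInt v a b + r * RInt w a b.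
Proof.
  intros Hu Hv Hw.
  assert (Cp : Cont1 (fun x => p * u x)) by (apply (Cont1_mult (fun _ => p)); auto using Cont1_const).
  assert (Cq : Cont1 (fun x => q * v x)) by (apply (Cont1_mult (fun _ => q)); auto using Cont1_const).
  assert (Cr : Cont1 (fun x => r * w x)) by (apply (Cont1_mult (fun _ => r)); auto using Cont1_const).
  rewrite (RInt_plus_R (fun x => p * u x + q * v x) (fun x => r * w x)) by (apply exRInt_C; auto using Cont1_plus).
  rewrite (RInt_plus_R (fun x => p * u x) (fun x => q * v x)) by (apply exRInt_C; auto).
  rewrite (RInt_scal_R u), (RInt_scal_R v), (RInt_scal_R w) by (apply exRInt_C; auto).
  reflexivity.
Qed.

Lemma RInt_nonneg (u : R -> R) a b : a <= b -> Cont1 u -> (forall x, a <= x <= b -> 0 <= u x) -> 0 <= RInt u a b.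
Proof. intros Hab Hu H. apply RInt_ge_0; auto. apply exRInt_C; auto. intros; apply H; lra. Qed.

Lemma RInt_mono (u v : R -> R) a b : a <= b -> Cont1 u -> Cont1 v -> (forall x, a <= x <= b -> u x <= v x) ->
  RInt u a b <= RInt v a b.
Proof. intros Hab Hu Hv H. apply RInt_le; auto; try apply exRInt_C; auto. intros; apply H; lra. Qed.

Lemma CS (f g : R -> R) a b : a <= b -> Cont1 f -> Cont1 g ->
  (RInt (fun x => f x * g x) a b) ^ 2 <= RInt (fun x => f x ^ 2) a b * RInt (fun x => g x ^ 2) a b.
Proof.
  intros Hab Hf Hg.
  set (A := RInt (fun x => f x ^ 2) a b). set (B := RInt (fun x => g x ^ 2) a b).
  set (C := RInt (fun x => f x * g x) a b).
  assert (Hq : forall l, 0 <= A - 2 * l * C + l ^ 2 * B).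
  { intros l.
    assert (E : RInt (fun x => (f x - l * g x) ^ 2) a b = A - 2 * l * C + l ^ 2 * B).
    { rewrite (RInt_ext_R (fun x => (f x - l * g x) ^ 2) (fun x => 1 * f x ^ 2 + (- 2 * l) * (f x * g x) + l ^ 2 * g x ^ 2)) by (intros; ring).
      rewrite (RInt_lin3 (fun x => f x ^ 2) (fun x => f x * g x) (fun x => g x ^ 2)) by auto using Cont1_sq, Cont1_mult.
      unfold A, B, C; match goal with |- ?x = ?y => change (@eq R x y) end; ring. }
    rewrite <- E. apply RInt_nonneg; auto.
    - apply Cont1_sq. apply Cont1_minus; auto. apply (Cont1_mult (fun _ => l)); auto using Cont1_const.
    - intros; apply pow2_ge_0. }
  assert (HB : 0 <= B) by (apply RInt_nonneg; auto using Cont1_sq; intros; apply pow2_ge_0).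
  destruct (Rle_lt_or_eq_dec 0 B HB) as [HBp|HB0].
  - specialize (Hq (C / B)).
    assert (A - 2 * (C / B) * C + (C / B) ^ 2 * B = (A * B - C ^ 2) / B) by (field; lra).
    rewrite H in Hq. assert (0 <= A * B - C ^ 2).
    { apply Rmult_le_reg_r with (/ B). apply Rinv_0_lt_compat; auto. rewrite Rmult_0_l. apply Hq. }
    lra.
  - rewrite <- HB0 in Hq. destruct (Req_dec C 0) as [HC|HC].
    + rewrite HC, <- HB0. lra.
    + specialize (Hq ((A + 1) / (2 * C))).
      assert (A - 2 * ((A + 1) / (2 * C)) * C + ((A + 1) / (2 * C)) ^ 2 * 0 = -1) by (field; auto).
      lra.
Qed.

Definition L2 a b (h : R -> R) := sqrt (RInt (fun x => h x ^ 2) a b).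

Lemma L2_pos a b h : 0 <= L2 a b h.
Proof. apply sqrt_pos. Qed.

Lemma L2_triang (f g : R -> R) a b : a <= b -> Cont1 f -> Cont1 g ->
  L2 a b (fun x => f x + g x) <= L2 a b f + L2 a b g.
Proof.
  intros Hab Hf Hg. unfold L2.
  set (A := RInt (fun x => f x ^ 2) a b). set (B := RInt (fun x => g x ^ 2) a b).
  set (C := RInt (fun x => f x * g x) a b).
  assert (HA : 0 <= A) by (apply RInt_nonneg; auto using Cont1_sq; intros; apply pow2_ge_0).
  assert (HB : 0 <= B) by (apply RInt_nonneg; auto using Cont1_sq; intros; apply pow2_ge_0).
  assert (E : RInt (fun x => (f x + g x) ^ 2) a b = A + 2 * C + B).
  { rewrite (RInt_ext_R (fun x => (f x + g x) ^ 2) (fun x => 1 * f x ^ 2 + 2 * (f x * g x) + 1 * g x ^ 2)) by (intros; ring).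
    rewrite (RInt_lin3 (fun x => f x ^ 2) (fun x => f x * g x) (fun x => g x ^ 2)) by auto using Cont1_sq, Cont1_mult.
    unfold A, B, C; match goal with |- ?x = ?y => change (@eq R x y) end; ring. }
  rewrite E.
  assert (HC : C <= sqrt A * sqrt B).
  { assert (H := CS f g a b Hab Hf Hg). fold A B C in H.
    rewrite <- sqrt_mult by auto. destruct (Rle_dec C 0); [apply Rle_trans with 0; auto; apply sqrt_pos|].
    rewrite <- (sqrt_pow2 C) by lra. apply sqrt_le_1_alt. lra. }
  rewrite <- (sqrt_pow2 (sqrt A + sqrt B)) by (pose proof (sqrt_pos A); pose proof (sqrt_pos B); lra).
  apply sqrt_le_1_alt.
  replace ((sqrt A + sqrt B) ^ 2) with (sqrt A * sqrt A + 2 * (sqrt A * sqrt B) + sqrt B * sqrt B) by ring.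
  rewrite !sqrt_sqrt by auto. lra.
Qed.

Lemma L2_mono (f g : R -> R) a b : a <= b -> Cont1 f -> Cont1 g ->
  (forall x, a <= x <= b -> Rabs (f x) <= g x) -> L2 a b f <= L2 a b g.
Proof.
  intros Hab Hf Hg H. unfold L2. apply sqrt_le_1_alt. apply RInt_mono; auto using Cont1_sq.
  intros x Hx. specialize (H x Hx). rewrite <- (pow2_abs (f x)).
  assert (0 <= Rabs (f x)) by apply Rabs_pos. nra.
Qed.

Lemma L2_const a b c : a <= b -> 0 <= c -> L2 a b (fun _ => c) = sqrt (b - a) * c.
Proof.
  intros Hab Hc. unfold L2. rewrite RInt_const_R. rewrite sqrt_mult by (try nra; lra).
  rewrite sqrt_pow2 by auto. reflexivity.
Qed.

Lemma L1_L2 (f : R -> R) : Cont1 f -> RInt (fun x => Rabs (f x)) 0 1 <= L2 0 1 f.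
Proof.
  intros Hf. unfold L2.
  assert (H := CS (fun x => Rabs (f x)) (fun _ => 1) 0 1 ltac:(lra) (Cont1_abs f Hf) (Cont1_const 1)).
  rewrite (RInt_ext_R (fun x => Rabs (f x) * 1) (fun x => Rabs (f x))) in H by (intros; ring).
  rewrite (RInt_ext_R (fun x => Rabs (f x) ^ 2) (fun x => f x ^ 2)) in H by (intros; apply pow2_abs).
  rewrite RInt_const_R in H. replace ((1 - 0) * 1 ^ 2) with 1 in H by ring. rewrite Rmult_1_r in H.
  rewrite <- (sqrt_pow2 (RInt (fun x => Rabs (f x)) 0 1)).
  apply sqrt_le_1_alt; auto.
  apply RInt_nonneg; auto using Cont1_abs; intros; try lra; apply Rabs_pos.
Qed.


Lemma exp_mono x y : x <= y -> exp x <= exp y.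
Proof. intros H. destruct (Rle_lt_or_eq_dec _ _ H). left; apply exp_increasing; auto. subst; lra. Qed.

Lemma lim_bound z A S c : 0 <= S -> (forall n, z <= A + S * (c ^ n / INR (Factorial.fact n))) -> z <= A.
Proof.
  intros HS H. destruct (Rle_dec z A) as [|Hz]; auto. exfalso.
  assert (He : 0 < (z - A) / (S + 1)) by (apply Rdiv_lt_0_compat; lra).
  destruct (cv_speed_pow_fact c _ He) as [N HN].
  specialize (HN N (Nat.le_refl N)). unfold Rdist in HN. rewrite Rminus_0_r in HN.
  specialize (H N). apply Rabs_def2 in HN. destruct HN as [HN _].
  assert (S * (c ^ N / INR (Factorial.fact N)) <= S * ((z - A) / (S + 1))) by (apply Rmult_le_compat_l; lra).
  assert (S * ((z - A) / (S + 1)) < z - A).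
  { apply Rmult_lt_reg_r with (S + 1); [lra|]. field_simplify; [|lra]. nra. }
  lra.
Qed.

Lemma RInt_shift (w : R -> R) t a b : Cont1 w -> RInt (fun y => w (y + t)) a b = RInt w (a + t) (b + t).
Proof.
  intros Hw. assert (H := RInt_comp_lin (V:=R_CompleteNormedModule) w 1 t a b).
  rewrite !Rmult_1_l in H. rewrite <- H by (apply exRInt_C; auto).
  apply RInt_ext; intros. change (scal 1 (w (1 * x + t))) with (1 * w (1 * x + t)). rewrite !Rmult_1_l. reflexivity.
Qed.

Lemma poly_deriv (Mf Sb b : R) (n : nat) x :
  is_derive (fun e => Mf * exp (Mf * (e - b)) + Sb * ((Mf * (e - b)) ^ S n / INR (Factorial.fact (S n)))) x
    (Mf * (Mf * exp (Mf * (x - b)) + Sb * ((Mf * (x - b)) ^ n / INR (Factorial.fact n)))).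
Proof.
  auto_derive; auto.
  change (match n with 0%nat => 1 | S _ => INR n + 1 end) with (INR (S n)).
  rewrite plus_INR, mult_INR, S_INR.
  assert (INR (Factorial.fact n) <> 0) by apply INR_fact_neq_0.
  assert (0 <= INR n) by apply pos_INR.
  replace (INR (Factorial.fact n) + INR n * INR (Factorial.fact n)) with ((INR n + 1) * INR (Factorial.fact n)) by ring.
  match goal with |- ?a = ?b => change (@eq R a b) end. unfold Rminus. field. split; auto. lra.
Qed.

Lemma Cont1_der (w : R -> R) : (forall x, ex_derive w x) -> Cont1 w.
Proof. intros H x. apply (ex_derive_continuous (K:=R_AbsRing) (V:=R_NormedModule)). apply H. Qed.

Lemma RInt_abs_le (g : R -> R) a b : a <= b -> Cont1 g -> Rabs (RInt g a b) <= RInt (fun t => Rabs (g t)) a b.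
Proof. intros; apply abs_RInt_le; auto. apply exRInt_C; auto. Qed.

Lemma pow_nonneg' x n : 0 <= x -> 0 <= x ^ n.
Proof. intros; apply pow_le; auto. Qed.

Lemma kbound (F Kx : R -> R -> R) (Mf : R) :
  Cont2 F -> C1_R2 Kx -> 0 <= Mf -> (forall x y, Tri x y -> Rabs (F x y) <= Mf) ->
  (forall x y, Tri x y -> pdy Kx x y + pdx Kx x y = F x y - RInt (fun eta => F x eta * Kx eta y) y x) ->
  (forall y, I01 y -> Kx 1 y = 0) ->
  forall x y, Tri x y -> Rabs (Kx x y) <= Mf * exp Mf.
Proof.
  intros HF HK HMf HFb HG HBC.
  assert (CK := C1_Cont2 Kx HK).
  destruct (Cont2_bounded Kx 0 1 0 1 CK) as [Sk HS].
  assert (HS0 : 0 <= Sk) by (eapply Rle_trans; [apply Rabs_pos| apply (HS 0 0)]; lra).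
  assert (P : forall n x y, Tri x y ->
     Rabs (Kx x y) <= Mf * exp (Mf * (x - y)) + Sk * ((Mf * (x - y)) ^ n / INR (Factorial.fact n))).
  { induction n as [|n IH]; intros x y Hxy; destruct Hxy as [H1 [H2 H3]].
    - simpl. replace (Sk * (1 / 1)) with Sk by field.
      assert (0 <= Mf * exp (Mf * (x - y))) by (apply Rmult_le_pos; auto; left; apply exp_pos).
      assert (Rabs (Kx x y) <= Sk) by (apply HS; lra). lra.
    - set (C := Mf * exp (Mf * (x - y)) + Sk * ((Mf * (x - y)) ^ (S n) / INR (Factorial.fact (S n)))).
      assert (HC : 0 <= C).
      { unfold C. apply Rplus_le_le_0_compat. apply Rmult_le_pos; auto; left; apply exp_pos.
        apply Rmult_le_pos; auto. apply Rdiv_le_0_compat. apply pow_nonneg'. nra.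
        apply lt_0_INR. apply lt_O_fact. }
      assert (Hd : forall s, 0 <= s <= 1 - x ->
        Rabs (pdx Kx (x + 1 * s) (y + 1 * s) * 1 + pdy Kx (x + 1 * s) (y + 1 * s) * 1) <= C).
      { intros s Hs. set (a := x + 1 * s). set (b := y + 1 * s).
        assert (Hab : Tri a b) by (unfold Tri, a, b; lra).
        replace (pdx Kx a b * 1 + pdy Kx a b * 1) with (pdy Kx a b + pdx Kx a b) by ring.
        rewrite (HG a b Hab).
        set (bnd := fun e => Mf * (Mf * exp (Mf * (e - b)) + Sk * ((Mf * (e - b)) ^ n / INR (Factorial.fact n)))).
        set (G := fun e => Mf * exp (Mf * (e - b)) + Sk * ((Mf * (e - b)) ^ S n / INR (Factorial.fact (S n)))).
        assert (Cb : Cont1 bnd).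
        { apply Cont1_der. intros e. unfold bnd. auto_derive. auto. }
        assert (Cg : Cont1 (fun eta => F a eta * Kx eta b)).
        { apply Cont1_mult. apply Cont2_t; auto. apply Cont2_x; auto. }
        assert (HI : RInt bnd b a = G a - G b).
        { apply (is_RInt_unique (V:=R_CompleteNormedModule)).
          apply (is_RInt_derive (V:=R_CompleteNormedModule) G bnd).
          - intros; apply poly_deriv.
          - intros; apply Cb. }
        assert (HGab : G a - G b = C - Mf).
        { unfold G, C. replace (a - b) with (x - y) by (unfold a, b; ring).
          replace (b - b) with 0 by ring. rewrite Rmult_0_r, exp_0.
          rewrite pow_i by lia. unfold Rdiv. ring. }
        assert (HI2 : Rabs (RInt (fun eta => F a eta * Kx eta b) b a) <= RInt bnd b a).
        { eapply Rle_trans. apply RInt_abs_le; auto. unfold Tri, a, b in *; lra.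
          apply RInt_mono; auto using Cont1_abs. unfold Tri, a, b in *; lra.
          intros e He. rewrite Rabs_mult. unfold bnd. apply Rmult_le_compat; try apply Rabs_pos.
          - apply HFb. unfold Tri, a, b in *; lra.
          - apply IH. unfold Tri, a, b in *; lra. }
        eapply Rle_trans. unfold Rminus. apply Rabs_triang. rewrite Rabs_Ropp.
        assert (Rabs (F a b) <= Mf) by (apply HFb; auto). lra. }
      assert (Hc := deriv_compare (fun s => Kx (x + 1 * s) (y + 1 * s))
              (fun s => pdx Kx (x + 1 * s) (y + 1 * s) * 1 + pdy Kx (x + 1 * s) (y + 1 * s) * 1)
              (fun s => C * s) (fun _ => C) 0 (1 - x) ltac:(lra)).
      simpl in Hc.
      assert (Hc' : Rabs (Kx (x + 1 * (1 - x)) (y + 1 * (1 - x)) - Kx (x + 1 * 0) (y + 1 * 0)) <= C * (1 - x) - C * 0).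
      { apply Hc; auto.
        - intros s _. apply C1_line; auto.
        - intros s _. apply (is_derive_ext (fun s => C * s)); [reflexivity|].
          auto_derive; auto. ring. }
      replace (x + 1 * (1 - x)) with 1 in Hc' by ring.
      rewrite HBC in Hc' by (unfold I01; lra).
      replace (x + 1 * 0) with x in Hc' by ring. replace (y + 1 * 0) with y in Hc' by ring.
      rewrite Rminus_0_l, Rabs_Ropp in Hc'.
      assert (C * (1 - x) - C * 0 <= C) by nra.
      fold C. lra. }
  intros x y Hxy.
  assert (Hb : Rabs (Kx x y) <= Mf * exp (Mf * (x - y))).
  { apply (lim_bound _ _ Sk (Mf * (x - y))); [auto| intros n; apply P; auto]. }
  eapply Rle_trans; [apply Hb|]. apply Rmult_le_compat_l; auto. apply exp_mono.
  destruct Hxy as [H1 [H2 H3]]. assert (x - y <= 1) by lra. nra.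
Qed.


Lemma RInt_ext_in (u v : R -> R) a b : (forall x, Rmin a b < x < Rmax a b -> u x = v x) -> RInt u a b = RInt v a b.
Proof. intros H; apply RInt_ext; auto. Qed.

Definition etil (Kx : R -> R -> R) (W : R -> R) x t :=
  W (x + t) - RInt (fun z => Kx x (z - t) * W z) t (x + t).

Lemma Cont2_lin (c : R) : Cont2 (fun x z => z - c).
Proof. apply Cont2_minus. apply Cont2_snd. apply Cont2_const. Qed.

Lemma Cont2_KW (Kx : R -> R -> R) (W : R -> R) t : Cont2 Kx -> Cont1 W ->
  Cont2 (fun x z => Kx x (z - t) * W z).
Proof.
  intros HK HW. apply Cont2_mult.
  - apply (Cont2_comp Kx (fun x z => x) (fun x z => z - t)); auto using Cont2_fst, Cont2_lin.
  - apply Cont2_w2; auto.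
Qed.

Lemma Cont1_shift (W : R -> R) t : Cont1 W -> Cont1 (fun y => W (y + t)).
Proof.
  intros HW. apply (Cont2_1 (fun a b => W b) (fun _ => 0) (fun y => y + t)).
  apply Cont2_w2; auto. apply Cont1_const. apply Cont1_plus. apply Cont1_id. apply Cont1_const.
Qed.

Lemma Cont1_etil Kx W t : Cont2 Kx -> Cont1 W -> Cont1 (fun y => etil Kx W y t).
Proof.
  intros HK HW. unfold etil. apply Cont1_minus. apply Cont1_shift; auto.
  apply (param_cont (fun x z => Kx x (z - t) * W z) (fun _ => t) (fun y => y + t)).
  apply Cont2_KW; auto. apply Cont1_const. apply Cont1_plus. apply Cont1_id. apply Cont1_const.
Qed.

Lemma RInt_shift_back (g : R -> R) t a : Cont1 g ->
  RInt g t (a + t) = RInt (fun y => g (y + t)) 0 a.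
Proof. intros Hg. rewrite RInt_shift by auto. rewrite Rplus_0_l. reflexivity. Qed.

Lemma key_identity (F Kx : R -> R -> R) (W : R -> R) x tau :
  Cont2 F -> C1_R2 Kx -> Cont1 W ->
  (forall x y, Tri x y -> pdy Kx x y + pdx Kx x y = F x y - RInt (fun eta => F x eta * Kx eta y) y x) ->
  0 <= x <= 1 ->
  RInt (fun z => (pdx Kx x (z - tau) * 1 + pdy Kx x (z - tau) * 1) * W z) tau (x + tau)
  = RInt (fun y => F x y * etil Kx W y tau) 0 x.
Proof.
  intros HF HK HW HG Hx.
  assert (CK := C1_Cont2 Kx HK). assert (CKx := C1_Cont2x Kx HK). assert (CKy := C1_Cont2y Kx HK).
  assert (Cs := Cont1_shift W tau HW).
  assert (CFx : Cont1 (fun y => F x y)) by (apply Cont2_t; auto).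
  rewrite RInt_shift_back.
  2:{ apply Cont1_mult; [|auto]. apply Cont1_plus; apply Cont1_mult; try apply Cont1_const.
      apply (Cont2_1 (pdx Kx) (fun _ => x) (fun z => z - tau)); auto using Cont1_const, Cont1_minus, Cont1_id.
      apply (Cont2_1 (pdy Kx) (fun _ => x) (fun z => z - tau)); auto using Cont1_const, Cont1_minus, Cont1_id. }
  set (I := fun y => RInt (fun eta => F x eta * Kx eta y) y x).
  rewrite (RInt_ext_in _ (fun y => F x y * W (y + tau) - RInt (fun eta => F x eta * Kx eta y * W (y + tau)) y x)).
  2:{ intros y Hy. rewrite Rmin_left, Rmax_right in Hy by lra.
      replace (y + tau - tau) with y by ring.
      replace (pdx Kx x y * 1 + pdy Kx x y * 1) with (pdy Kx x y + pdx Kx x y) by ring.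
      rewrite HG by (unfold Tri; lra).
      rewrite (RInt_ext_R (fun eta => F x eta * Kx eta y * W (y + tau)) (fun eta => W (y + tau) * (F x eta * Kx eta y))) by (intros; ring).
      rewrite RInt_scal_R. ring. apply exRInt_C. apply Cont1_mult; auto. apply Cont2_x; auto. }
  assert (Ch : Cont2 (fun eta y => F x eta * Kx eta y * W (y + tau))).
  { apply Cont2_mult. apply Cont2_mult. apply (Cont2_comp F (fun _ _ => x) (fun eta y => eta)); auto using Cont2_const, Cont2_fst.
    auto. apply Cont2_w2; auto. }
  rewrite RInt_minus_R.
  2:{ apply exRInt_C. apply Cont1_mult; auto. }
  2:{ apply exRInt_C. apply (param_cont (fun y eta => F x eta * Kx eta y * W (y + tau)) (fun y => y) (fun _ => x)).
      apply Cont2_swap; auto. apply Cont1_id. apply Cont1_const. }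
  rewrite (fubini_tri (fun eta y => F x eta * Kx eta y * W (y + tau))) by auto.
  unfold etil.
  rewrite (RInt_ext_R (fun y => F x y * (W (y + tau) - RInt (fun z => Kx y (z - tau) * W z) tau (y + tau)))
             (fun y => F x y * W (y + tau) - RInt (fun eta => F x y * Kx y eta * W (eta + tau)) 0 y)).
  2:{ intros y. rewrite (RInt_shift_back (fun z => Kx y (z - tau) * W z)).
      2:{ apply Cont1_mult; auto. apply (Cont2_1 Kx (fun _ => y) (fun z => z - tau)); auto using Cont1_const, Cont1_minus, Cont1_id. }
      rewrite (RInt_ext_R (fun eta => F x y * Kx y eta * W (eta + tau)) (fun eta => F x y * (Kx y (eta + tau - tau) * W (eta + tau)))).
      2:{ intros; replace (x0 + tau - tau) with x0 by ring. ring. }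
      rewrite RInt_scal_R. ring. apply exRInt_C. apply Cont1_mult.
      apply (Cont2_1 Kx (fun _ => y) (fun z => z + tau - tau)); auto using Cont1_const, Cont1_minus, Cont1_id, Cont1_plus.
      apply Cont1_shift; auto. }
  rewrite RInt_minus_R. reflexivity.
  apply exRInt_C. apply Cont1_mult; auto.
  apply exRInt_C. apply (param_cont (fun y eta => F x y * Kx y eta * W (eta + tau)) (fun _ => 0) (fun y => y)).
  apply Cont2_mult. apply Cont2_mult. apply (Cont2_comp F (fun _ _ => x) (fun y eta => y)); auto using Cont2_const, Cont2_fst.
  auto. apply (Cont2_comp (fun a b => W b) (fun _ _ => 0) (fun y eta => eta + tau)); auto using Cont2_const.
  apply Cont2_w2; auto. apply Cont2_plus. apply Cont2_snd. apply Cont2_const.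
  apply Cont1_const. apply Cont1_id.
Qed.

Lemma line_K (K : R -> R -> R) c u : C1_R2 K ->
  is_derive (fun v => K v (c + v)) u (pdx K u (c + u) * 1 + pdy K u (c + u) * 1).
Proof.
  intros HK. assert (H := C1_line K 0 c 1 1 u HK).
  rewrite Rplus_0_l, Rmult_1_l in H.
  eapply is_derive_ext; [| exact H]. intros v. simpl. rewrite Rplus_0_l, Rmult_1_l. reflexivity.
Qed.

Lemma line_H (H : R -> R -> R) (s u : R) : C1_R2 H ->
  is_derive (fun v => H v (s - v)) u (pdx H u (s - u) * 1 + pdy H u (s - u) * -1).
Proof.
  intros HH. assert (D := C1_line H 0 s 1 (-1) u HH).
  replace (0 + 1 * u) with u in D by ring. replace (s + -1 * u) with (s - u) in D by ring.
  eapply is_derive_ext; [| exact D]. intros v. simpl. rewrite Rplus_0_l, Rmult_1_l. replace (-1 * v) with (- v) by (simpl; ring). reflexivity.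
Qed.

Lemma is_derive_val (f : R -> R) x a b : is_derive f x a -> a = b -> is_derive f x b.
Proof. intros H E; subst; auto. Qed.

Lemma is_derive_mulc (f : R -> R) x d w : is_derive f x d -> is_derive (fun v => f v * w) x (d * w).
Proof.
  intros H. assert (H2 := is_derive_scal f x w d H).
  eapply is_derive_ext; [| eapply is_derive_val; [exact H2|]].
  - intros t. simpl. apply Rmult_comm.
  - apply Rmult_comm.
Qed.

Lemma poly_deriv2 (Mf Sb : R) (n : nat) x :
  is_derive (fun e => Sb * ((Mf * e) ^ S n / INR (fact (S n)))) x
    (Sb * (Mf * ((Mf * x) ^ n / INR (fact n)))).
Proof.
  auto_derive; auto.
  change (match n with 0%nat => 1 | S _ => INR n + 1 end) with (INR (S n)).
  rewrite plus_INR, mult_INR, S_INR.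
  assert (INR (fact n) <> 0) by apply INR_fact_neq_0.
  assert (0 <= INR n) by apply pos_INR.
  replace (INR (fact n) + INR n * INR (fact n)) with ((INR n + 1) * INR (fact n)) by ring.
  match goal with |- ?a = ?b => change (@eq R a b) end. field. split; auto. lra.
Qed.

Lemma main_identity (F Kx Hu Huh : R -> R -> R) (Mf : R) :
  Cont2 F -> C1_R2 Kx -> C1_R2 Hu -> C1_R2 Huh -> 0 <= Mf ->
  (forall x y, Tri x y -> Rabs (F x y) <= Mf) ->
  (forall x y, Tri x y -> pdy Kx x y + pdx Kx x y = F x y - RInt (fun eta => F x eta * Kx eta y) y x) ->
  (forall x t, Dom x t -> pdy Hu x t - pdy Huh x t = (pdx Hu x t - pdx Huh x t)
       + Kx x 0 * (Hu 0 t - Huh 0 t) + RInt (fun y => F x y * (Hu y t - Huh y t)) 0 x) ->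
  forall x t, Dom x t -> Hu x t - Huh x t = etil Kx (fun s => Hu 0 s - Huh 0 s) x t.
Proof.
  intros HF HK HHu HHuh HMf HFb HG HPDE.
  set (E := fun x t => Hu x t - Huh x t). set (W := fun s => Hu 0 s - Huh 0 s).
  assert (CK := C1_Cont2 Kx HK). assert (CKx := C1_Cont2x Kx HK). assert (CKy := C1_Cont2y Kx HK).
  assert (CE : Cont2 E) by (apply Cont2_minus; apply C1_Cont2; auto).
  assert (CW : Cont1 W) by (apply (Cont2_1 E (fun _ => 0) (fun s => s)); auto using Cont1_const, Cont1_id).
  intros x0 t0 [Hx0 Ht0]. set (T := t0).
  destruct (Cont2_bounded E 0 1 0 (T + 1) CE) as [SE HSE].
  destruct (Cont2_bounded (fun a b => W b) 0 0 0 (T + 2) (Cont2_w2 W CW)) as [SW HSW].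
  destruct (Cont2_bounded Kx 0 1 0 1 CK) as [SK HSK].
  assert (SK0 : 0 <= SK) by (eapply Rle_trans; [apply Rabs_pos| apply (HSK 0 0)]; lra).
  assert (SW0 : 0 <= SW) by (eapply Rle_trans; [apply Rabs_pos| apply (HSW 0 0)]; unfold T; lra).
  set (Sb := SE + SW + SK * SW).
  set (Om := fun y tau => 0 <= y <= 1 /\ 0 <= tau /\ tau <= T + 1 - y).
  assert (B0 : forall y tau, Om y tau -> Rabs (E y tau - etil Kx W y tau) <= Sb).
  { intros y tau [Hy [Ht1 Ht2]].
    assert (Rabs (E y tau) <= SE) by (apply HSE; lra).
    assert (Rabs (W (y + tau)) <= SW) by (apply (HSW 0); lra).
    assert (Rabs (RInt (fun z => Kx y (z - tau) * W z) tau (y + tau)) <= Rabs (y + tau - tau) * (SK * SW)).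
    { apply RInt_abs_bound. apply exRInt_C. apply (Cont2_t (fun x z => Kx x (z - tau) * W z)). apply Cont2_KW; auto.
      intros z Hz. rewrite Rmin_left, Rmax_right in Hz by lra. rewrite Rabs_mult.
      apply Rmult_le_compat; try apply Rabs_pos. apply HSK; lra. apply (HSW 0); lra. }
    replace (y + tau - tau) with y in H1 by ring. rewrite (Rabs_right y) in H1 by lra.
    unfold etil. 
    assert (Rabs (E y tau - (W (y + tau) - RInt (fun z => Kx y (z - tau) * W z) tau (y + tau))) <=
            Rabs (E y tau) + Rabs (W (y + tau)) + Rabs (RInt (fun z => Kx y (z - tau) * W z) tau (y + tau))).
    { eapply Rle_trans. apply Rabs_triang. rewrite Rabs_Ropp.
      assert (Rabs (W (y + tau) - RInt (fun z => Kx y (z - tau) * W z) tau (y + tau)) <=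
              Rabs (W (y + tau)) + Rabs (RInt (fun z => Kx y (z - tau) * W z) tau (y + tau))).
      { unfold Rminus at 1. eapply Rle_trans. apply Rabs_triang. rewrite Rabs_Ropp. lra. }
      lra. }
    assert (0 <= SK * SW) by (apply Rmult_le_pos; auto).
    assert (y * (SK * SW) <= SK * SW) by nra.
    unfold Sb. lra. }
  assert (P : forall n y tau, Om y tau ->
     Rabs (E y tau - etil Kx W y tau) <= Sb * ((Mf * y) ^ n / INR (fact n))).
  { induction n as [|n IH]; intros x t Hom.
    - simpl. replace (Sb * (1 / 1)) with Sb by field. apply B0; auto.
    - destruct Hom as [Hx [Ht1 Ht2]]. set (s := x + t).
      set (phi := fun sg => (Hu sg (s - sg) - Huh sg (s - sg)) - W s
                    + RInt (fun z => Kx sg (z - s + sg) * W z) (s - sg) s).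
      set (dphi := fun sg => (pdx Hu sg (s - sg) * 1 + pdy Hu sg (s - sg) * -1)
                    - (pdx Huh sg (s - sg) * 1 + pdy Huh sg (s - sg) * -1) - 0
                    + (RInt (fun z => (pdx Kx sg (z - s + sg) * 1 + pdy Kx sg (z - s + sg) * 1) * W z) (s - sg) s
                       - Kx sg (s - sg - s + sg) * W (s - sg) * -1 + Kx sg (s - s + sg) * W s * 0)).
      assert (Hder : forall sg, is_derive phi sg (dphi sg)).
      { intros sg. unfold phi, dphi.
        apply (is_derive_plus (K:=R_AbsRing) (V:=R_NormedModule)).
        apply (is_derive_minus (K:=R_AbsRing) (V:=R_NormedModule)).
        apply (is_derive_minus (K:=R_AbsRing) (V:=R_NormedModule)).
        apply line_H; auto. apply line_H; auto.
        apply (is_derive_const (K:=R_AbsRing) (V:=R_NormedModule)).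
        apply (param_deriv (fun sg z => Kx sg (z - s + sg) * W z)
                 (fun sg z => (pdx Kx sg (z - s + sg) * 1 + pdy Kx sg (z - s + sg) * 1) * W z)
                 (fun sg => s - sg) (fun _ => s) sg (-1) 0).
        - intros u z. apply (is_derive_mulc (fun v => Kx v (z - s + v))). apply line_K; auto.
        - apply Cont2_mult; [|apply Cont2_w2; auto].
          assert (Ca : Cont2 (fun sg z => z - s + sg)) by (apply Cont2_plus; [apply Cont2_lin|apply Cont2_fst]).
          apply Cont2_plus; apply Cont2_mult; try apply Cont2_const.
          apply (Cont2_comp (pdx Kx) (fun sg z => sg) (fun sg z => z - s + sg)); auto using Cont2_fst.
          apply (Cont2_comp (pdy Kx) (fun sg z => sg) (fun sg z => z - s + sg)); auto using Cont2_fst.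
        - apply Cont2_mult; [|apply Cont2_w2; auto].
          assert (Ca : Cont2 (fun sg z => z - s + sg)) by (apply Cont2_plus; [apply Cont2_lin|apply Cont2_fst]).
          apply (Cont2_comp Kx (fun sg z => sg) (fun sg z => z - s + sg)); auto using Cont2_fst.
        - auto_derive; auto.
        - apply (is_derive_const (K:=R_AbsRing) (V:=R_NormedModule)). }
      assert (HdE : forall sg, 0 <= sg <= x ->
        dphi sg = - RInt (fun y => F sg y * (E y (s - sg) - etil Kx W y (s - sg))) 0 sg).
      { intros sg Hsg. unfold dphi.
        assert (Hdom : Dom sg (s - sg)) by (unfold Dom, s; lra).
        assert (KI := key_identity F Kx W sg (s - sg) HF HK CW HG ltac:(lra)).
        replace (sg + (s - sg)) with s in KI by ring.
        rewrite (RInt_ext_R (fun z => (pdx Kx sg (z - s + sg) * 1 + pdy Kx sg (z - s + sg) * 1) * W z)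
                  (fun z => (pdx Kx sg (z - (s - sg)) * 1 + pdy Kx sg (z - (s - sg)) * 1) * W z))
          by (intros z; replace (z - s + sg) with (z - (s - sg)) by ring; reflexivity).
        rewrite KI. replace (s - sg - s + sg) with 0 by ring.
        assert (HP := HPDE sg (s - sg) Hdom). fold W in HP.
        rewrite (RInt_ext_R (fun y => F sg y * (E y (s - sg) - etil Kx W y (s - sg)))
                  (fun y => F sg y * E y (s - sg) - F sg y * etil Kx W y (s - sg))) by (intros; ring).
        rewrite RInt_minus_R.
        2:{ apply exRInt_C. apply Cont1_mult. apply Cont2_t; auto. apply Cont2_x; auto. }
        2:{ apply exRInt_C. apply Cont1_mult. apply Cont2_t; auto. apply Cont1_etil; auto. }
        assert (HP' : pdy Hu sg (s - sg) = pdy Huh sg (s - sg) + (pdx Hu sg (s - sg) - pdx Huh sg (s - sg))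
            + Kx sg 0 * W (s - sg) + RInt (fun y => F sg y * E y (s - sg)) 0 sg) by (unfold W, E; lra).
        rewrite HP'. ring. }
      assert (Hbd : forall sg, 0 <= sg <= x -> Rabs (dphi sg) <= Sb * (Mf * ((Mf * sg) ^ n / INR (fact n)))).
      { intros sg Hsg. rewrite HdE by auto. rewrite Rabs_Ropp.
        set (q := (Mf * sg) ^ n / INR (fact n)).
        assert (Hq : 0 <= q) by (unfold q; apply Rdiv_le_0_compat; [apply pow_nonneg'; nra| apply lt_0_INR, lt_O_fact]).
        assert (Sb0 : 0 <= Sb) by (eapply Rle_trans; [apply Rabs_pos| apply (B0 0 0)]; unfold Om, T; lra).
        eapply Rle_trans. apply RInt_abs_bound with (K := Mf * (Sb * q)).
        { apply exRInt_C. apply Cont1_mult. apply Cont2_t; auto. apply Cont1_minus. apply Cont2_x; auto. apply Cont1_etil; auto. }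
        { intros y Hy. rewrite Rmin_left, Rmax_right in Hy by lra. rewrite Rabs_mult.
          apply Rmult_le_compat; try apply Rabs_pos.
          - apply HFb. unfold Tri; lra.
          - eapply Rle_trans. apply IH. unfold Om, s; lra.
            apply Rmult_le_compat_l; auto. unfold q. unfold Rdiv. apply Rmult_le_compat_r.
            left; apply Rinv_0_lt_compat, lt_0_INR, lt_O_fact.
            apply pow_incr. split; nra. }
        rewrite Rminus_0_r, Rabs_right by lra.
        assert (0 <= Mf * (Sb * q)) by (apply Rmult_le_pos; auto; apply Rmult_le_pos; auto).
        assert (sg * (Mf * (Sb * q)) <= Mf * (Sb * q)) by nra.
        replace (Sb * (Mf * q)) with (Mf * (Sb * q)) by ring. lra. }
      assert (Hc := deriv_compare phi dphi (fun e => Sb * ((Mf * e) ^ S n / INR (fact (S n))))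
                      (fun e => Sb * (Mf * ((Mf * e) ^ n / INR (fact n)))) 0 x ltac:(lra)
                      (fun sg _ => Hder sg) (fun sg _ => poly_deriv2 Mf Sb n sg) Hbd).
      cbv beta in Hc. rewrite Rmult_0_r, pow_i, Rdiv_0_l, Rmult_0_r, Rminus_0_r in Hc by lia.
      assert (Hp0 : phi 0 = 0).
      { unfold phi. rewrite Rminus_0_r, RInt_pt. unfold W. ring. }
      assert (Hpx : phi x = E x t - etil Kx W x t).
      { unfold phi, etil, E. replace (s - x) with t by (unfold s; ring). unfold s.
        rewrite (RInt_ext_R (fun z => Kx x (z - (x + t) + x) * W z) (fun z => Kx x (z - t) * W z))
          by (intros z; replace (z - (x + t) + x) with (z - t) by ring; reflexivity).
        ring. }
      rewrite Hp0, Hpx, Rminus_0_r in Hc. exact Hc. }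
  assert (Hf : Rabs (E x0 t0 - etil Kx W x0 t0) <= 0).
  { apply (lim_bound _ 0 Sb (Mf * x0)).
    - eapply Rle_trans; [apply Rabs_pos| apply (B0 0 0)]; unfold Om, T; lra.
    - intros n. rewrite Rplus_0_l. apply P. unfold Om, T; lra. }
  assert (Rabs (E x0 t0 - etil Kx W x0 t0) = 0) by (pose proof (Rabs_pos (E x0 t0 - etil Kx W x0 t0)); lra).
  apply Rabs_eq_0 in H. unfold E, T in *. lra.
Qed.



Lemma RInt_sub_le (b : R -> R) x y z w : z <= x -> x <= y -> y <= w -> Cont1 b ->
  (forall s, z <= s <= w -> 0 <= b s) -> RInt b x y <= RInt b z w.
Proof.
  intros H1 H2 H3 Hb Hp.
  assert (E1 : RInt b z x + RInt b x w = RInt b z w) by (apply (RInt_Chasles (V:=R_CompleteNormedModule)); apply exRInt_C; auto).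
  assert (E2 : RInt b x y + RInt b y w = RInt b x w) by (apply (RInt_Chasles (V:=R_CompleteNormedModule)); apply exRInt_C; auto).
  assert (0 <= RInt b z x) by (apply RInt_nonneg; auto; intros; apply Hp; lra).
  assert (0 <= RInt b y w) by (apply RInt_nonneg; auto; intros; apply Hp; lra).
  lra.
Qed.

Lemma gronwall (a b : R -> R) B : Cont1 a -> Cont1 b -> 0 <= B ->
  (forall x, 0 <= x <= 1 -> 0 <= b x) ->
  (forall x, 0 <= x <= 1 -> a x <= b x + B * RInt a 0 x) ->
  forall x, 0 <= x <= 1 -> a x <= b x + B * exp B * RInt b 0 1.
Proof.
  intros Ca Cb HB Hb Ha.
  set (Psi := fun x => exp (- B * x) * RInt a 0 x - RInt (fun z => exp (- B * z) * b z) 0 x).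
  assert (Ce : Cont1 (fun z => exp (- B * z))) by (apply Cont1_der; intros; auto_derive; auto).
  assert (Ceb : Cont1 (fun z => exp (- B * z) * b z)) by (apply Cont1_mult; auto).
  assert (Hd : forall x, is_derive Psi x (exp (- B * x) * (a x - b x - B * RInt a 0 x))).
  { intros x. unfold Psi.
    eapply is_derive_val.
    apply (is_derive_minus (K:=R_AbsRing) (V:=R_NormedModule)).
    apply (is_derive_mult (K:=R_AbsRing) (fun x => exp (- B * x)) (fun x => RInt a 0 x)).
    auto_derive; auto. apply FTC_deriv; auto. intros; apply Rmult_comm.
    apply (FTC_deriv (fun z => exp (- B * z) * b z)); auto.
    simpl. change (mult ?p ?q) with (p * q). change (plus ?p ?q) with (p + q). change (minus ?p ?q) with (p - q).
    ring. }
  intros x Hx.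
  assert (HPsi : Psi x <= Psi 0).
  { apply (deriv_nonpos Psi (fun x => exp (- B * x) * (a x - b x - B * RInt a 0 x)) 0 x); try lra.
    intros; apply Hd. intros y Hy. specialize (Ha y ltac:(lra)).
    assert (0 < exp (- B * y)) by apply exp_pos. nra. }
  unfold Psi in HPsi. rewrite !RInt_pt, Rmult_0_r in HPsi.
  assert (H1 : RInt (fun z => exp (- B * z) * b z) 0 x <= RInt b 0 1).
  { eapply Rle_trans. apply RInt_mono with (v := b); auto; try lra.
    intros z Hz. assert (exp (- B * z) <= 1) by (rewrite <- exp_0; apply exp_mono; nra).
    specialize (Hb z ltac:(lra)). nra.
    apply RInt_sub_le; auto; lra. }
  assert (H2 : RInt a 0 x <= exp B * RInt b 0 1).
  { assert (E : exp (B * x) * exp (- B * x) = 1) by (rewrite <- exp_plus; replace (B * x + - B * x) with 0 by ring; apply exp_0).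
    assert (exp (B * x) <= exp B) by (apply exp_mono; nra).
    assert (0 <= RInt b 0 1) by (apply RInt_nonneg; auto; lra).
    assert (0 < exp (B * x)) by apply exp_pos.
    replace (RInt a 0 x) with (exp (B * x) * (exp (- B * x) * RInt a 0 x)) by (rewrite <- Rmult_assoc, E; ring).
    apply Rle_trans with (exp (B * x) * RInt b 0 1); [|apply Rmult_le_compat_r; auto].
    apply Rmult_le_compat_l; lra. }
  specialize (Ha x Hx). nra.
Qed.

Lemma RInt_zero_tail (g : R -> R) a b : a <= b -> (forall s, a <= s <= b -> g s = 0) -> RInt g a b = 0.
Proof.
  intros Hab H. rewrite (RInt_ext_in g (fun _ => 0)). rewrite RInt_const_R, Rmult_0_r. reflexivity.
  intros x Hx. rewrite Rmin_left, Rmax_right in Hx by lra. apply H; lra.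
Qed.

Lemma RInt_W_tail (g : R -> R) c : 1 <= c -> Cont1 g -> (forall s, 1 <= s -> g s = 0) -> RInt g 0 c = RInt g 0 1.
Proof.
  intros Hc Cg H.
  assert (E : RInt g 0 1 + RInt g 1 c = RInt g 0 c) by (apply (RInt_Chasles (V:=R_CompleteNormedModule)); apply exRInt_C; auto).
  rewrite (RInt_zero_tail g 1 c Hc (fun s Hs => H s (proj1 Hs))) in E. lra.
Qed.

Lemma l2_final (Kx E : R -> R -> R) (W : R -> R) B :
  Cont2 Kx -> Cont1 W -> Cont2 E -> 0 <= B -> (forall x y, Tri x y -> Rabs (Kx x y) <= B) ->
  (forall s, 1 <= s -> W s = 0) ->
  (forall x t, 0 <= x <= 1 -> 0 <= t -> E x t = etil Kx W x t) ->
  forall t, 0 <= t -> L2 0 1 (fun x => E x t) <= (1 + B) * (1 + B * exp B) * L2 0 1 (fun x => E x 0).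
Proof.
  intros CK CW CE HB HKb HW0 Hid t Ht.
  assert (CaW : Cont1 (fun x => Rabs (W x))) by (apply Cont1_abs; auto).
  assert (CE0 : Cont1 (fun x => E x 0)) by (apply Cont2_x; auto).
  assert (CaE0 : Cont1 (fun x => Rabs (E x 0))) by (apply Cont1_abs; auto).
  assert (HA : L2 0 1 W <= (1 + B * exp B) * L2 0 1 (fun x => E x 0)).
  { assert (Hrec : forall x, 0 <= x <= 1 -> Rabs (W x) <= Rabs (E x 0) + B * RInt (fun z => Rabs (W z)) 0 x).
    { intros x Hx. assert (Hi := Hid x 0 Hx ltac:(lra)). unfold etil in Hi.
      rewrite Rplus_0_r in Hi.
      rewrite (RInt_ext_R (fun z => Kx x (z - 0) * W z) (fun z => Kx x z * W z)) in Hi by (intros; rewrite Rminus_0_r; reflexivity).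
      replace (W x) with (E x 0 + RInt (fun z => Kx x z * W z) 0 x) by lra.
      eapply Rle_trans. apply Rabs_triang. apply Rplus_le_compat_l.
      assert (Ckw : Cont1 (fun z => Kx x z * W z)) by (apply Cont1_mult; auto; apply Cont2_t; auto).
      eapply Rle_trans. apply RInt_abs_le; auto; lra.
      rewrite <- RInt_scal_R by (apply exRInt_C; auto).
      apply RInt_mono; auto using Cont1_abs; try lra.
      apply (Cont1_mult (fun _ => B)); auto using Cont1_const.
      intros z Hz. rewrite Rabs_mult. apply Rmult_le_compat_r. apply Rabs_pos. apply HKb. unfold Tri; lra. }
    assert (Hg := gronwall (fun x => Rabs (W x)) (fun x => Rabs (E x 0)) B CaW CaE0 HB
                   (fun x _ => Rabs_pos (E x 0)) Hrec).
    set (c := B * exp B * RInt (fun x => Rabs (E x 0)) 0 1) in Hg.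
    assert (Hc0 : 0 <= c).
    { unfold c. apply Rmult_le_pos. apply Rmult_le_pos; auto. left; apply exp_pos.
      apply RInt_nonneg; auto; try lra. intros; apply Rabs_pos. }
    eapply Rle_trans. apply (L2_mono W (fun x => Rabs (E x 0) + c)); auto; try lra.
    apply Cont1_plus; auto using Cont1_const.
    eapply Rle_trans. apply L2_triang; auto using Cont1_const; lra.
    rewrite L2_const by lra. replace (sqrt (1 - 0)) with 1 by (rewrite Rminus_0_r; symmetry; apply sqrt_1).
    assert (E1 : L2 0 1 (fun x => Rabs (E x 0)) = L2 0 1 (fun x => E x 0)).
    { unfold L2. f_equal. apply RInt_ext_R. intros; apply pow2_abs. }
    rewrite E1.
    assert (c <= B * exp B * L2 0 1 (fun x => E x 0)).
    { unfold c. apply Rmult_le_compat_l. apply Rmult_le_pos; auto. left; apply exp_pos.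
      apply L1_L2; auto. }
    lra. }
  set (A := RInt (fun z => Rabs (W z)) 0 1).
  assert (HA0 : 0 <= A) by (apply RInt_nonneg; auto; try lra; intros; apply Rabs_pos).
  assert (Hpt : forall x, 0 <= x <= 1 -> Rabs (E x t) <= Rabs (W (x + t)) + B * A).
  { intros x Hx. rewrite Hid by auto. unfold etil.
    eapply Rle_trans. unfold Rminus. apply Rabs_triang. rewrite Rabs_Ropp. apply Rplus_le_compat_l.
    assert (Ckw : Cont1 (fun z => Kx x (z - t) * W z)).
    { apply Cont1_mult; auto. apply (Cont2_1 Kx (fun _ => x) (fun z => z - t)); auto using Cont1_const, Cont1_minus, Cont1_id. }
    eapply Rle_trans. apply RInt_abs_le; auto; lra.
    apply Rle_trans with (RInt (fun z => B * Rabs (W z)) t (x + t)).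
    { apply RInt_mono; auto using Cont1_abs; try lra.
      apply (Cont1_mult (fun _ => B)); auto using Cont1_const.
      intros z Hz. rewrite Rabs_mult. apply Rmult_le_compat_r. apply Rabs_pos. apply HKb. unfold Tri; lra. }
    rewrite RInt_scal_R by (apply exRInt_C; auto). apply Rmult_le_compat_l; auto.
    unfold A. rewrite <- (RInt_W_tail (fun z => Rabs (W z)) (t + 2)); auto; try lra.
    apply RInt_sub_le; auto; try lra. intros; apply Rabs_pos.
    intros s Hs. rewrite HW0 by auto. apply Rabs_R0. }
  assert (Csh : Cont1 (fun x => W (x + t))) by (apply Cont1_shift; auto).
  assert (HB2 : L2 0 1 (fun x => E x t) <= (1 + B) * L2 0 1 W).
  { eapply Rle_trans. apply (L2_mono (fun x => E x t) (fun x => Rabs (W (x + t)) + B * A)); auto; try lra.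
    apply Cont2_x; auto. apply Cont1_plus; auto using Cont1_const, Cont1_abs.
    eapply Rle_trans. apply L2_triang; auto using Cont1_const, Cont1_abs; try lra.
    rewrite L2_const by (try lra; apply Rmult_le_pos; auto).
    replace (sqrt (1 - 0)) with 1 by (rewrite Rminus_0_r; symmetry; apply sqrt_1). rewrite Rmult_1_l.
    assert (H1 : L2 0 1 (fun x => Rabs (W (x + t))) <= L2 0 1 W).
    { unfold L2. apply sqrt_le_1_alt.
      rewrite (RInt_ext_R (fun x => Rabs (W (x + t)) ^ 2) (fun x => W (x + t) ^ 2)) by (intros; apply pow2_abs).
      rewrite (RInt_shift (fun z => W z ^ 2) t 0 1) by (apply Cont1_sq; auto). rewrite Rplus_0_l.
      rewrite <- (RInt_W_tail (fun z => W z ^ 2) (t + 2)); auto using Cont1_sq; try lra.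
      apply RInt_sub_le; auto using Cont1_sq; try lra. intros; apply pow2_ge_0.
      intros s Hs. rewrite HW0 by auto. ring. }
    assert (H2 : A <= L2 0 1 W) by (apply L1_L2; auto).
    assert (B * A <= B * L2 0 1 W) by (apply Rmult_le_compat_l; auto).
    lra. }
  eapply Rle_trans. apply HB2.
  rewrite Rmult_assoc. apply Rmult_le_compat_l; [lra|]. exact HA.
Qed.


Lemma etil_zero Kx W x t : 0 <= x -> 1 <= t -> (forall s, 1 <= s -> W s = 0) -> etil Kx W x t = 0.
Proof.
  intros Hx Ht HW. unfold etil. rewrite HW by lra.
  rewrite (RInt_zero_tail (fun z => Kx x (z - t) * W z) t (x + t)). ring. lra.
  intros s Hs. rewrite HW by lra. ring.
Qed.

Theorem theorem2
  (f : R -> R -> R) (g : R -> R) (Mf : R)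
  (k kx ky : R -> R -> R)
  (U Udot u0 u0' uh0 uh0' : R -> R)
  (u ux ut uh uhx uht : R -> R -> R)
  (Hf : exists fx fy, C1_on2 Tri f fx fy)
  (Hg : exists g', C1_on I01 g g')
  (HMf : is_lub (fun r => exists x y, Tri x y /\ r = Rabs (f x y)) Mf)
  (Hk : C1_on2 Tri k kx ky)
  (HkPDE : forall x y, Tri x y ->
      ky x y + kx x y = f x y - RInt (fun eta => f x eta * k eta y) y x)
  (HkBC : forall y, I01 y -> k 1 y = 0)
  (HU : C1_on Rplus_set U Udot)
  (Hu0 : C1_on I01 u0 u0')
  (Huh0 : C1_on I01 uh0 uh0')
  (Hcomp1 : u0 1 = U 0)
  (Hcomp2 : Udot 0 = u0' 1 + g 1 * u0 0 + RInt (fun y => f 1 y * u0 y) 0 1)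
  (Hcomp3 : uh0 1 = U 0)
  (Hcomp4 : Udot 0 = uh0' 1 + g 1 * uh0 0 + RInt (fun y => f 1 y * uh0 y) 0 1
                     + (g 1 - k 1 0) * (u0 0 - uh0 0))
  (Hu : C1_on2 Dom u ux ut)
  (HuPDE : forall x t, Dom x t ->
      ut x t = ux x t + g x * u 0 t + RInt (fun y => f x y * u y t) 0 x)
  (HuBC : forall t, 0 <= t -> u 1 t = U t)
  (HuIC : forall x, I01 x -> u x 0 = u0 x)
  (Huh : C1_on2 Dom uh uhx uht)
  (HuhPDE : forall x t, Dom x t ->
      uht x t = uhx x t + g x * uh 0 t + RInt (fun y => f x y * uh y t) 0 x
                + (g x - k x 0) * (u 0 t - uh 0 t))
  (HuhBC : forall t, 0 <= t -> uh 1 t = U t)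
  (HuhIC : forall x, I01 x -> uh x 0 = uh0 x) :
  (forall t c, 0 <= t -> 0 < c ->
     L2norm (fun x => u x t - uh x t) <=
       (exp c * (1 + (Mf * exp Mf) * exp (Mf * exp Mf)) * (1 + Mf * exp Mf))
       * exp (- c * t) * L2norm (fun x => u0 x - uh0 x))
  /\ (forall x t, I01 x -> 1 <= t -> uh x t = u x t).
Proof.
  destruct Hf as [fx [fy [F [HF HFT]]]].
  destruct Hk as [Kx [HK HKT]].
  destruct Hu as [Hue [HHu HHuD]].
  destruct Huh as [Huhe [HHuh HHuhD]].
  assert (CF : Cont2 F) by (apply C1_Cont2; auto).
  assert (CK : Cont2 Kx) by (apply C1_Cont2; auto).
  destruct HMf as [HMub HMlub].
  assert (HFb : forall x y, Tri x y -> Rabs (F x y) <= Mf).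
  { intros x y Hxy. rewrite (proj1 (HFT x y Hxy)). apply HMub. exists x, y. auto. }
  assert (HMf0 : 0 <= Mf) by (eapply Rle_trans; [apply Rabs_pos | apply (HFb 0 0)]; unfold Tri; lra).
  assert (HG : forall x y, Tri x y -> pdy Kx x y + pdx Kx x y = F x y - RInt (fun eta => F x eta * Kx eta y) y x).
  { intros x y Hxy. destruct (HKT x y Hxy) as [_ [E1 E2]]. rewrite E1, E2, HkPDE by auto.
    rewrite (proj1 (HFT x y Hxy)). f_equal. apply RInt_ext_in. intros eta Heta.
    destruct Hxy as [H1 [H2 H3]]. rewrite Rmin_left, Rmax_right in Heta by lra.
    rewrite (proj1 (HFT x eta ltac:(unfold Tri; lra))), (proj1 (HKT eta y ltac:(unfold Tri; lra))). reflexivity. }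
  assert (HBC : forall y, I01 y -> Kx 1 y = 0).
  { intros y Hy. rewrite (proj1 (HKT 1 y ltac:(unfold Tri, I01 in *; lra))). apply HkBC; auto. }
  assert (HKb := kbound F Kx Mf CF HK HMf0 HFb HG HBC).
  assert (HPDE : forall x t, Dom x t -> pdy Hue x t - pdy Huhe x t = (pdx Hue x t - pdx Huhe x t)
       + Kx x 0 * (Hue 0 t - Huhe 0 t) + RInt (fun y => F x y * (Hue y t - Huhe y t)) 0 x).
  { intros x t Hd. destruct (HHuD x t Hd) as [U1 [U2 U3]]. destruct (HHuhD x t Hd) as [V1 [V2 V3]].
    assert (Hd0 : Dom 0 t) by (unfold Dom in *; lra).
    destruct (HHuD 0 t Hd0) as [U01 _]. destruct (HHuhD 0 t Hd0) as [V01 _].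
    rewrite U2, U3, V2, V3, U01, V01.
    rewrite HuPDE, HuhPDE by auto.
    rewrite (proj1 (HKT x 0 ltac:(unfold Tri, Dom in *; lra))).
    assert (Cu : Cont1 (fun y => F x y * Hue y t)) by (apply Cont1_mult; [apply Cont2_t|apply Cont2_x]; auto; apply C1_Cont2; auto).
    assert (Cuh : Cont1 (fun y => F x y * Huhe y t)) by (apply Cont1_mult; [apply Cont2_t|apply Cont2_x]; auto; apply C1_Cont2; auto).
    assert (Ext : forall (h : R -> R -> R) (he : R -> R -> R), (forall y, Dom y t -> he y t = h y t) ->
              RInt (fun y => f x y * h y t) 0 x = RInt (fun y => F x y * he y t) 0 x).
    { intros h he Hh. apply RInt_ext_in. intros y Hy. unfold Dom in Hd. rewrite Rmin_left, Rmax_right in Hy by lra.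
      rewrite (proj1 (HFT x y ltac:(unfold Tri; lra))), Hh by (unfold Dom; lra). reflexivity. }
    rewrite (Ext u Hue) by (intros y Hy; apply (HHuD y t Hy)).
    rewrite (Ext uh Huhe) by (intros y Hy; apply (HHuhD y t Hy)).
    rewrite (RInt_ext_R (fun y => F x y * (Hue y t - Huhe y t)) (fun y => F x y * Hue y t - F x y * Huhe y t)) by (intros; ring).
    rewrite RInt_minus_R by (apply exRInt_C; auto). ring. }
  assert (Hid := main_identity F Kx Hue Huhe Mf CF HK HHu HHuh HMf0 HFb HG HPDE).
  set (W := fun s => Hue 0 s - Huhe 0 s) in Hid.
  set (E := fun x t => Hue x t - Huhe x t).
  assert (CE : Cont2 E) by (apply Cont2_minus; apply C1_Cont2; auto).
  assert (CW : Cont1 W) by (apply (Cont2_1 E (fun _ => 0) (fun s => s)); auto using Cont1_const, Cont1_id).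
  assert (HW0 : forall s, 1 <= s -> W s = 0).
  { intros s Hs. set (t := s - 1). assert (Hd : Dom 1 t) by (unfold Dom, t; lra).
    assert (H1 := Hid 1 t Hd). unfold etil in H1.
    destruct (HHuD 1 t Hd) as [U1 _]. destruct (HHuhD 1 t Hd) as [V1 _].
    rewrite U1, V1, HuBC, HuhBC in H1 by (unfold t; lra).
    rewrite (RInt_zero_tail (fun z => Kx 1 (z - t) * W z) t (1 + t)) in H1.
    - replace (1 + t) with s in H1 by (unfold t; ring). lra.
    - lra.
    - intros z Hz. rewrite HBC by (unfold I01; lra). ring. }
  assert (Hid' : forall x t, 0 <= x <= 1 -> 0 <= t -> E x t = etil Kx W x t).
  { intros x t Hx Ht. apply Hid. unfold Dom; auto. }
  split.
  - intros t c Ht Hc.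
    assert (HL : L2norm (fun x => u x t - uh x t) = L2 0 1 (fun x => E x t)).
    { unfold L2norm, L2. f_equal. apply RInt_ext_in. intros x Hx. rewrite Rmin_left, Rmax_right in Hx by lra.
      unfold E. rewrite (proj1 (HHuD x t ltac:(unfold Dom; lra))), (proj1 (HHuhD x t ltac:(unfold Dom; lra))). reflexivity. }
    assert (HL0 : L2norm (fun x => u0 x - uh0 x) = L2 0 1 (fun x => E x 0)).
    { unfold L2norm, L2. f_equal. apply RInt_ext_in. intros x Hx. rewrite Rmin_left, Rmax_right in Hx by lra.
      unfold E. rewrite (proj1 (HHuD x 0 ltac:(unfold Dom; lra))), (proj1 (HHuhD x 0 ltac:(unfold Dom; lra))).
      rewrite HuIC, HuhIC by (unfold I01; lra). reflexivity. }
    rewrite HL, HL0.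
    set (B := Mf * exp Mf) in *.
    assert (HB0 : 0 <= B) by (unfold B; apply Rmult_le_pos; auto; left; apply exp_pos).
    assert (HE0 : 0 <= L2 0 1 (fun x => E x 0)) by apply L2_pos.
    destruct (Rlt_dec t 1) as [Ht1|Ht1].
    + assert (Hmain := l2_final Kx E W B CK CW CE HB0 HKb HW0 Hid' t Ht).
      eapply Rle_trans. apply Hmain.
      assert (He : 1 <= exp c * exp (- c * t)).
      { rewrite <- exp_plus. rewrite <- exp_0. apply exp_mono. nra. }
      assert (0 <= (1 + B) * (1 + B * exp B)).
      { apply Rmult_le_pos; [lra|]. assert (0 <= B * exp B) by (apply Rmult_le_pos; auto; left; apply exp_pos). lra. }
      replace (exp c * (1 + B * exp B) * (1 + B) * exp (- c * t) * L2 0 1 (fun x => E x 0))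
        with ((exp c * exp (- c * t)) * ((1 + B) * (1 + B * exp B) * L2 0 1 (fun x => E x 0))) by ring.
      assert (0 <= (1 + B) * (1 + B * exp B) * L2 0 1 (fun x => E x 0)) by (apply Rmult_le_pos; auto).
      nra.
    + apply Rnot_lt_le in Ht1.
      assert (HZ : L2 0 1 (fun x => E x t) = 0).
      { unfold L2. rewrite (RInt_zero_tail (fun x => E x t ^ 2) 0 1). apply sqrt_0. lra.
        intros x Hx. rewrite Hid' by lra. rewrite (etil_zero Kx W x t ltac:(lra) Ht1 HW0). ring. }
      rewrite HZ. apply Rmult_le_pos; auto. apply Rmult_le_pos; [|left; apply exp_pos].
      apply Rmult_le_pos; [|lra]. apply Rmult_le_pos; [left; apply exp_pos|].
      assert (0 <= B * exp B) by (apply Rmult_le_pos; auto; left; apply exp_pos). lra.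
  - intros x t Hx Ht. unfold I01 in Hx.
    assert (Hd : Dom x t) by (unfold Dom; lra).
    rewrite <- (proj1 (HHuD x t Hd)), <- (proj1 (HHuhD x t Hd)).
    assert (H := Hid' x t Hx ltac:(lra)). rewrite (etil_zero Kx W x t ltac:(lra) Ht HW0) in H. unfold E in H. lra.
Qed.
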